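(* Let $\alpha,\beta\in\mathbb{R}$ and $\eta\in\{1,-1\}$, and let $G_4$ be the connected, simply connected Lie group whose Lie algebra $\mathfrak{g}_4$ has a basis $\{e_1,e_2,e_3\}$ with $[e_1,e_2]=-e_2+(2\eta-\beta)e_3$, $[e_1,e_3]=-\beta e_2+e_3$, $[e_2,e_3]=\alpha e_1$, equipped with the left-invariant Lorentzian metric $g$ for which $\{e_1,e_2,e_3\}$ is pseudo-orthonormal with $e_3$ timelike, and with the product structure $J$. Let $\lambda_0,c\in\mathbb{R}$. Then there exists a derivation $D$ of $\mathfrak{g}_4$ with $\widetilde{\mathrm{Ric}}^0=(s^0\lambda_0+c)\mathrm{Id}+D$ (i.e. $(G_4,g,J)$ is an algebraic Schouten soliton associated to the canonical connection $\nabla^0$) if and only if $\alpha=0$, $\beta=\eta$ and $c=0$.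
   Context: Pseudo-orthonormal means $g(e_1,e_1)=g(e_2,e_2)=1$, $g(e_3,e_3)=-1$, $g(e_i,e_j)=0$ for $i\neq j$; left-invariant tensors are identified with their values on $\mathfrak{g}$. $\nabla$ is the Levi-Civita connection of $g$. The product structure $J$ is the left-invariant endomorphism with $Je_1=e_1$, $Je_2=e_2$, $Je_3=-e_3$. The canonical connection is $\nabla^0_XY=\nabla_XY-\frac12(\nabla_XJ)JY$, and the Kobayashi–Nomizu connection is $\nabla^1_XY=\nabla^0_XY-\frac14[(\nabla_YJ)JX-(\nabla_{JY}J)X]$. For $k=0,1$: $R^k(X,Y)Z=\nabla^k_X\nabla^k_YZ-\nabla^k_Y\nabla^k_XZ-\nabla^k_{[X,Y]}Z$; $\rho^k(X,Y)=-g(R^k(X,e_1)Y,e_1)-g(R^k(X,e_2)Y,e_2)+g(R^k(X,e_3)Y,e_3)$; $\widetilde\rho^k(X,Y)=\frac12(\rho^k(X,Y)+\rho^k(Y,X))$; $\widetilde{\mathrm{Ric}}^k$ is defined by $\widetilde\rho^k(X,Y)=g(\widetilde{\mathrm{Ric}}^k(X),Y)$; and $s^k=\widetilde\rho^k(e_1,e_1)+\widetilde\rho^k(e_2,e_2)-\widetilde\rho^k(e_3,e_3)$. A derivation of $\mathfrak{g}$ is a linear map $D$ with $D[X,Y]=[DX,Y]+[X,DY]$. $(G,g,J)$ is an algebraic Schouten soliton associated to $\nabla^k$ (with real constants $\lambda_0,c$) if $\widetilde{\mathrm{Ric}}^k=(s^k\lambda_0+c)\mathrm{Id}+D$ for some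 derivation $D$. *)

(* Defs.v *)
(* Left-invariant objects on the 3-dim Lie group G_4 are
   identified with their values on the Lie algebra g_4 = R^3 (column vectors
   'cV[R]_3 of coordinates in the basis e1,e2,e3). *)
From HB Require Import structures.
From mathcomp Require Import all_boot all_order all_algebra.
Set Implicit Arguments. Unset Strict Implicit. Unset Printing Implicit Defensive.
Import Order.TTheory GRing.Theory Num.Theory.
Local Open Scope ring_scope.

Section G4.
Variable R : realFieldType.
Variables (al be et : R).

Definition i1 : 'I_3 := @Ordinal 3 0 isT.
Definition i2 : 'I_3 := @Ordinal 3 1 isT.
Definition i3 : 'I_3 := @Ordinal 3 2 isT.

Definition x1 (X : 'cV[R]_3) : R := X i1 ord0.
Definition x2 (X : 'cV[R]_3) : R := X i2 ord0.
Definition x3 (X : 'cV[R]_3) : R := X i3 ord0.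

Definition vec3 (a b c : R) : 'cV[R]_3 := \col_(i < 3) nth 0 [:: a; b; c] i.

Definition e1 : 'cV[R]_3 := vec3 1 0 0.
Definition e2 : 'cV[R]_3 := vec3 0 1 0.
Definition e3 : 'cV[R]_3 := vec3 0 0 1.

(* Lie bracket of g_4, extended bilinearly and skew-symmetrically from
   [e1,e2] = -e2 + (2 eta - beta) e3, [e1,e3] = -beta e2 + e3, [e2,e3] = alpha e1 *)
Definition br (X Y : 'cV[R]_3) : 'cV[R]_3 :=
  (x1 X * x2 Y - x2 X * x1 Y) *: vec3 0 (-1) (2 * et - be)
+ (x1 X * x3 Y - x3 X * x1 Y) *: vec3 0 (- be) 1
+ (x2 X * x3 Y - x3 X * x2 Y) *: vec3 al 0 0.

Definition g (X Y : 'cV[R]_3) : R := x1 X * x1 Y + x2 X * x2 Y - x3 X * x3 Y.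

(* Levi-Civita connection on left-invariant fields (Koszul formula):
   2 g(nabla_X Y, Z) = g([X,Y],Z) - g([Y,Z],X) + g([Z,X],Y),
   and W = g(W,e1) e1 + g(W,e2) e2 - g(W,e3) e3. *)
Definition koszul (X Y Z : 'cV[R]_3) : R :=
  (g (br X Y) Z - g (br Y Z) X + g (br Z X) Y) / 2.
Definition nabla (X Y : 'cV[R]_3) : 'cV[R]_3 :=
  vec3 (koszul X Y e1) (koszul X Y e2) (- koszul X Y e3).

Definition J (X : 'cV[R]_3) : 'cV[R]_3 := vec3 (x1 X) (x2 X) (- x3 X).

Definition nablaJ (X Y : 'cV[R]_3) : 'cV[R]_3 := nabla X (J Y) - J (nabla X Y).

Definition nabla0 (X Y : 'cV[R]_3) : 'cV[R]_3 :=
  nabla X Y - (1/2) *: nablaJ X (J Y).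

Definition curv0 (X Y Z : 'cV[R]_3) : 'cV[R]_3 :=
  nabla0 X (nabla0 Y Z) - nabla0 Y (nabla0 X Z) - nabla0 (br X Y) Z.

Definition rho0 (X Y : 'cV[R]_3) : R :=
  - g (curv0 X e1 Y) e1 - g (curv0 X e2 Y) e2 + g (curv0 X e3 Y) e3.

Definition rho0t (X Y : 'cV[R]_3) : R := (rho0 X Y + rho0 Y X) / 2.

Definition s0 : R := rho0t e1 e1 + rho0t e2 e2 - rho0t e3 e3.

Definition is_derivation (D : 'M[R]_3) : Prop :=
  forall X Y : 'cV[R]_3, D *m br X Y = br (D *m X) Y + br X (D *m Y).

(* algebraic Schouten soliton for nabla0: Ric~0 = (s0 lambda0 + c) Id + D,
   Ric~0 being defined by rho~0(X,Y) = g(Ric~0 X, Y). *)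
Definition schouten_soliton0 (lam0 c : R) : Prop :=
  exists D : 'M[R]_3, is_derivation D /\
    forall X Y : 'cV[R]_3, rho0t X Y = g ((s0 * lam0 + c) *: X + D *m X) Y.

End G4.

(* Main.v *)
Require Import Defs.
From HB Require Import structures.
From mathcomp Require Import all_boot all_order all_algebra.
From mathcomp Require Import ring lra.
Import Order.TTheory GRing.Theory Num.Theory.
Local Open Scope ring_scope.
Set Implicit Arguments. Unset Strict Implicit.

Section S.
Variable R : realFieldType.
Implicit Types (X Y Z : 'cV[R]_3).

Lemma x1v (a b c : R) : x1 (vec3 a b c) = a. Proof. by rewrite /x1 /vec3 mxE. Qed.
Lemma x2v (a b c : R) : x2 (vec3 a b c) = b. Proof. by rewrite /x2 /vec3 mxE. Qed.
Lemma x3v (a b c : R) : x3 (vec3 a b c) = c. Proof. by rewrite /x3 /vec3 mxE. Qed.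
Lemma x1D X Y : x1 (X + Y) = x1 X + x1 Y. Proof. by rewrite /x1 mxE. Qed.
Lemma x2D X Y : x2 (X + Y) = x2 X + x2 Y. Proof. by rewrite /x2 mxE. Qed.
Lemma x3D X Y : x3 (X + Y) = x3 X + x3 Y. Proof. by rewrite /x3 mxE. Qed.
Lemma x1N X : x1 (- X) = - x1 X. Proof. by rewrite /x1 mxE. Qed.
Lemma x2N X : x2 (- X) = - x2 X. Proof. by rewrite /x2 mxE. Qed.
Lemma x3N X : x3 (- X) = - x3 X. Proof. by rewrite /x3 mxE. Qed.
Lemma x1Z (t : R) X : x1 (t *: X) = t * x1 X. Proof. by rewrite /x1 mxE. Qed.
Lemma x2Z (t : R) X : x2 (t *: X) = t * x2 X. Proof. by rewrite /x2 mxE. Qed.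
Lemma x3Z (t : R) X : x3 (t *: X) = t * x3 X. Proof. by rewrite /x3 mxE. Qed.

Lemma x10 : x1 (0 : 'cV[R]_3) = 0. Proof. by rewrite /x1 mxE. Qed.
Lemma x20 : x2 (0 : 'cV[R]_3) = 0. Proof. by rewrite /x2 mxE. Qed.
Lemma x30 : x3 (0 : 'cV[R]_3) = 0. Proof. by rewrite /x3 mxE. Qed.
Definition xE := (x10, x20, x30, x1v, x2v, x3v, x1D, x2D, x3D, x1N, x2N, x3N, x1Z, x2Z, x3Z).

Lemma vec3P X Y : x1 X = x1 Y -> x2 X = x2 Y -> x3 X = x3 Y -> X = Y.
Proof.
move=> h1 h2 h3; apply/matrixP=> i j; rewrite ord1.
case: i => [[|[|[|//]]] Hi].
- by have <- : i1 = Ordinal Hi by apply: val_inj.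
- by have <- : i2 = Ordinal Hi by apply: val_inj.
- by have <- : i3 = Ordinal Hi by apply: val_inj.
Qed.

Variables al be et : R.

Definition w X := x2 X + (et + al/2) * x3 X.

Lemma brE X Y : br al be et X Y = vec3
  (al * (x2 X * x3 Y - x3 X * x2 Y))
  (- (x1 X * x2 Y - x2 X * x1 Y) - be * (x1 X * x3 Y - x3 X * x1 Y))
  ((2 * et - be) * (x1 X * x2 Y - x2 X * x1 Y) + (x1 X * x3 Y - x3 X * x1 Y)).
Proof. apply: vec3P; rewrite /br !xE; ring. Qed.

Lemma nabla0E X Y : nabla0 al be et X Y = vec3 (- w X * x2 Y) (w X * x1 Y) 0.
Proof.
apply: vec3P; rewrite /nabla0 /nablaJ /nabla /J /koszul /g /e1 /e2 /e3 /w !brE !xE; field; rewrite ?pnatr_eq0 //.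
Qed.

Lemma curv0E X Y Z : curv0 al be et X Y Z =
  vec3 (w (br al be et X Y) * x2 Z) (- w (br al be et X Y) * x1 Z) 0.
Proof. apply: vec3P; rewrite /curv0 !nabla0E !xE; ring. Qed.

Definition T := -1 + 2*et^+2 - be*et + al*et - al*be/2.
Definition u := et/2 - be/2 + al/4.

Lemma rho0tE X Y : rho0t al be et X Y =
  T * (x1 X * x1 Y + x2 X * x2 Y) + u * (x2 X * x3 Y + x3 X * x2 Y).
Proof.
rewrite /rho0t /rho0 !curv0E /g /w /e1 /e2 /e3 !brE !xE /T /u; field; rewrite ?pnatr_eq0 //.
Qed.
End S.


Lemma xmul1 (R : realFieldType) (D : 'M[R]_3) X : x1 (D *m X) = D i1 i1 * x1 X + D i1 i2 * x2 X + D i1 i3 * x3 X.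
Proof.
rewrite /x1 /x2 /x3 mxE !big_ord_recl big_ord0 addr0 addrA.
have -> : (lift ord0 (lift ord0 ord0) : 'I_3) = i3 by apply: val_inj.
have -> : (lift ord0 ord0 : 'I_3) = i2 by apply: val_inj.
by have -> : (ord0 : 'I_3) = i1 by apply: val_inj.
Qed.

Lemma xmul (R : realFieldType) (D : 'M[R]_3) X i : (D *m X) i ord0 = D i i1 * x1 X + D i i2 * x2 X + D i i3 * x3 X.
Proof.
rewrite /x1 /x2 /x3 mxE !big_ord_recl big_ord0 addr0 addrA.
have -> : (lift ord0 (lift ord0 ord0) : 'I_3) = i3 by apply: val_inj.
have -> : (lift ord0 ord0 : 'I_3) = i2 by apply: val_inj.
by have -> : (ord0 : 'I_3) = i1 by apply: val_inj.
Qed.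
Lemma xmul2 (R : realFieldType) (D : 'M[R]_3) X : x2 (D *m X) = D i2 i1 * x1 X + D i2 i2 * x2 X + D i2 i3 * x3 X.
Proof. exact: xmul. Qed.
Lemma xmul3 (R : realFieldType) (D : 'M[R]_3) X : x3 (D *m X) = D i3 i1 * x1 X + D i3 i2 * x2 X + D i3 i3 * x3 X.
Proof. exact: xmul. Qed.
Definition xmulE := (xmul1, xmul2, xmul3).

Lemma fwd (R : realFieldType) (al be et : R) (lam0 c : R) :
  schouten_soliton0 al be et lam0 c ->
  let k := s0 al be et * lam0 + c in
  [/\ al * k = 0, 2 * u al be et = k * be & T al be et - k + u al be et * (2 * et - be - be) = 0].
Proof.
move=> [D [Hd Hr]] k.
have rr : forall X Y, rho0t al be et X Y = g (k *: X + D *m X) Y by [].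
have d11 : D i1 i1 = T al be et - k.
  by move: (rr (e1 R) (e1 R)); rewrite rho0tE /g /e1 !xE !xmulE !xE; lra.
have d22 : D i2 i2 = T al be et - k.
  by move: (rr (e2 R) (e2 R)); rewrite rho0tE /g /e2 !xE !xmulE !xE; lra.
have d33 : D i3 i3 = - k.
  by move: (rr (e3 R) (e3 R)); rewrite rho0tE /g /e3 !xE !xmulE !xE; lra.
have d23 : D i2 i3 = u al be et.
  by move: (rr (e3 R) (e2 R)); rewrite rho0tE /g /e3 /e2 !xE !xmulE !xE; lra.
have d32 : D i3 i2 = - u al be et.
  by move: (rr (e2 R) (e3 R)); rewrite rho0tE /g /e3 /e2 !xE !xmulE !xE; lra.
have d21 : D i2 i1 = 0.
  by move: (rr (e1 R) (e2 R)); rewrite rho0tE /g /e1 /e2 !xE !xmulE !xE; lra.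
have d31 : D i3 i1 = 0.
  by move: (rr (e1 R) (e3 R)); rewrite rho0tE /g /e1 /e3 !xE !xmulE !xE; lra.
have d12 : D i1 i2 = 0.
  by move: (rr (e2 R) (e1 R)); rewrite rho0tE /g /e1 /e2 !xE !xmulE !xE; lra.
have d13 : D i1 i3 = 0.
  by move: (rr (e3 R) (e1 R)); rewrite rho0tE /g /e1 /e3 !xE !xmulE !xE; lra.
have hA := congr1 (@x2 R) (Hd (e1 R) (e2 R)).
have hB := congr1 (@x3 R) (Hd (e1 R) (e2 R)).
have hC := congr1 (@x2 R) (Hd (e1 R) (e3 R)).
have hD := congr1 (@x1 R) (Hd (e2 R) (e3 R)).
rewrite !brE /e1 /e2 /e3 !xE !xmulE !xE d11 d22 d33 d23 d32 d21 d31 d12 d13 in hA hB hC hD.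
by split; rewrite /T /u in hA hB hC hD *; nra.
Qed.

Lemma alg1 (R : realFieldType) (al be et lam0 c k : R) : (et = 1 \/ et = -1) ->
  k = 2 * T al be et * lam0 + c ->
  al * k = 0 -> 2 * u al be et = k * be -> T al be et - k + u al be et * (2 * et - be - be) = 0 ->
  al = 0 /\ be = et /\ c = 0.
Proof.
rewrite /T /u => het hk h1 h2 h3.
have /orP[/eqP al0|/eqP k0] : (al == 0) || (k == 0) by rewrite -mulf_eq0 h1.
- subst al.
  have hk3 : k = (-1 + 2 * et ^+ 2 - be * et + 0 * et - 0 * be / 2) + (et / 2 - be / 2 + 0 / 4) * (2 * et - be - be) by lra.
  rewrite hk3 in h2 hk; clear hk3 h3.
  case: het => het; subst et.
  + have : (be - 1) ^+ 3 = 0 by nra.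
    move/eqP; rewrite expf_eq0 /= subr_eq0 => /eqP hb; subst be.
    split=> //; split=> //; nra.
  + have : (be + 1) ^+ 3 = 0 by nra.
    move/eqP; rewrite expf_eq0 /= addr_eq0 => /eqP hb; subst be.
    split=> //; split=> //; nra.
- rewrite k0 in h1 h2 h3 hk.
  have hal : al = 2 * (be - et) by lra.
  subst al.
  case: het => het; subst et.
  + have : (be - 1) ^+ 2 = 0 by nra.
    move/eqP; rewrite expf_eq0 /= subr_eq0 => /eqP hb; subst be.
    split; first by ring. split=> //; nra.
  + have : (be + 1) ^+ 2 = 0 by nra.
    move/eqP; rewrite expf_eq0 /= addr_eq0 => /eqP hb; subst be.
    split; first by ring. split=> //; nra.
Qed.

Lemma s0E (R : realFieldType) (al be et : R) : s0 al be et = 2 * T al be et.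
Proof. rewrite /s0 !rho0tE /e1 /e2 /e3 !xE; ring. Qed.

Theorem theorem4p8 (R : realFieldType) (al be et : R) (het : et = 1 \/ et = -1)
    (lam0 c : R) :
  schouten_soliton0 al be et lam0 c <-> (al = 0 /\ be = et /\ c = 0).
Proof.
split.
- move=> H; have [h1 h2 h3] := fwd H.
  by apply: (alg1 het _ h1 h2 h3); rewrite s0E.
- move=> [-> [-> ->]]; exists 0; split.
  + move=> X Y; rewrite !mul0mx; apply: vec3P; rewrite !brE !xE; ring.
  + move=> X Y; rewrite rho0tE s0E mul0mx addr0 /g !xE /T /u.
    case: het => ->; ring.
Qed.
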